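(* Let $w$ be a non-binary word. Then every element of $\mathtt{BR}(w)$ is rich if and only if either $w = a_1a_2\cdots a_k$ where $a_1,\dots,a_k\in\Sigma$ are pairwise distinct letters, or $w = c^{|w|}$ for a single letter $c\in\Sigma$.
   Context: $\Sigma$ is an alphabet; $\Sigma^*$ is the set of finite words over $\Sigma$. For a word $w=w_1\cdots w_n$ ($w_i\in\Sigma$), $|w|=n$ and $w^R=w_n\cdots w_1$; $w$ is a palindrome if $w=w^R$. A factor of $w$ is a word $u$ with $w=puq$ for some words $p,q$. A word $w$ is rich if the number of distinct nonempty palindromic factors of $w$ equals $|w|$ (the maximum possible). $\mathrm{Alph}(w)$ denotes the set of letters occurring in $w$. The block reversal of a nonempty word $w$ is $\mathtt{BR}(w)=\{B_tB_{t-1}\cdots B_1 : w=B_1B_2\cdots B_t,\ t\ge 1,\ B_i\in\Sigma^+\}$. A non-binary word is a nonempty word $w$ with $|\mathrm{Alph}(w)|\neq 2$. *)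

(* Defs.v *)
From mathcomp Require Import all_boot.
Set Implicit Arguments. Unset Strict Implicit. Unset Printing Implicit Defensive.

Definition factors (T : eqType) (w : seq T) : seq (seq T) :=
  [seq take j (drop i w) | i <- iota 0 (size w).+1, j <- iota 0 (size w - i).+1].

Definition is_factor (T : eqType) (u w : seq T) : bool := infix u w.

Definition palindrome (T : eqType) (w : seq T) : bool := rev w == w.

Definition pal_factors (T : eqType) (w : seq T) : seq (seq T) :=
  undup [seq u <- factors w | (u != [::]) && palindrome u].

Definition rich (T : eqType) (w : seq T) : Prop := size (pal_factors w) = size w.

Definition in_BR (T : eqType) (w v : seq T) : Prop :=
  exists bs : seq (seq T),
    [/\ bs != [::], all (fun b => b != [::]) bs, flatten bs = w & v = flatten (rev bs)].

Definition nalph (T : eqType) (w : seq T) : nat := size (undup w).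

(* Main.v *)
Require Import Defs.
From mathcomp Require Import all_boot zify.
Set Implicit Arguments. Unset Strict Implicit. Unset Printing Implicit Defensive.

Section S.
Variable T : eqType.
Implicit Types (t u w v m p s : seq T).

Lemma mem_factors t w : (t \in factors w) = infix t w.
Proof.
apply/allpairsPdep/idP.
  move=> [i [j [_ _ ->]]].
  apply: (infix_trans (infix_take _ _)); exact: suffixW (suffix_drop _ _).
move/infixP=> [s [s' ->]].
exists (size s), (size t); rewrite !mem_iota !size_cat /=; split.
- lia.
- lia.
- by rewrite drop_size_cat // take_size_cat.
Qed.

Lemma mem_pal t w : (t \in pal_factors w) = [&& t != [::], palindrome t & infix t w].
Proof. by rewrite mem_undup mem_filter mem_factors andbA. Qed.

Definition pc w := size (pal_factors w).

Lemma pal_uniq w : uniq (pal_factors w).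
Proof. exact: undup_uniq. Qed.

Lemma pc_rev w : pc (rev w) = pc w.
Proof.
apply: perm_size; apply: uniq_perm; rewrite ?pal_uniq // => t.
rewrite !mem_pal; case: (t != [::]) => //=.
case Hp: (palindrome t) => //=.
by rewrite -{1}(eqP Hp) infix_rev.
Qed.


Lemma suffix_size t w : suffix t w -> size t <= size w.
Proof. by move/suffixP=> [q ->]; rewrite size_cat leq_addl. Qed.

Lemma suffix_short t1 t2 w : suffix t1 w -> suffix t2 w -> size t1 <= size t2 ->
  suffix t1 t2.
Proof.
move=> h1 h2 hs; have hs2 := suffix_size h2.
rewrite suffixE in h1; rewrite suffixE in h2.
move/eqP: h1 => e1; move/eqP: h2 => e2.
move: (size t1) (size t2) hs hs2 e1 e2 => n1 n2 hs hs2 e1 e2.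
rewrite suffixE -e1 -e2 !size_drop drop_drop; apply/eqP; congr drop.
lia.
Qed.

Lemma suffix_same t1 t2 w : suffix t1 w -> suffix t2 w -> size t1 = size t2 -> t1 = t2.
Proof.
rewrite !suffixE => /eqP e1 /eqP e2 es.
by rewrite -e1 -e2 es.
Qed.

Lemma pal_suffix_infix t1 t2 u x : palindrome t1 -> palindrome t2 ->
  suffix t1 (rcons u x) -> suffix t2 (rcons u x) -> size t1 < size t2 -> infix t1 u.
Proof.
move=> p1 p2 h1 h2 hs.
have := suffix_short h1 h2 (ltnW hs).
rewrite -prefix_rev (eqP p1) (eqP p2) => /prefixP [r er].
move/suffixP: h2 => [q eq].
case/lastP: r er => [|r' y] er.
  by move: hs; rewrite er cats0 ltnn.
move: eq; rewrite er -!rcons_cat => eq'; case: (rcons_inj eq') => -> _.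
by apply/infixP; exists q, r'; rewrite catA.
Qed.

Lemma pc_rcons u x : pc (rcons u x) <= (pc u).+1.
Proof.
case: (boolP (all (mem (pal_factors u)) (pal_factors (rcons u x)))) => H.
  apply: leqW; apply: uniq_leq_size; first exact: pal_uniq.
  by move=> t /(allP H).
case/allPn: H => t ht htn.
have key : forall t', t' \in pal_factors (rcons u x) -> t' \notin pal_factors u ->
  [/\ palindrome t', suffix t' (rcons u x) & ~~ infix t' u].
  move=> t'; rewrite !mem_pal => /and3P [n1 p1 i1].
  rewrite n1 p1 /= => ni; split => //.
  by move: i1; rewrite infix_rconsl (negbTE ni) orbF.
have [pt st nit] := key t ht htn.
apply: (@uniq_leq_size _ _ (t :: pal_factors u)); first exact: pal_uniq.
move=> t' ht'; rewrite inE; case: (boolP (t' \in pal_factors u)) => [hin|hn]; first by apply/orP; right.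
have [pt' st' nit'] := key t' ht' hn.
case: (ltngtP (size t') (size t)) => hs.
- by rewrite (pal_suffix_infix pt' pt st' st hs) in nit'.
- by rewrite (pal_suffix_infix pt pt' st st' hs) in nit.
- by rewrite (suffix_same st' st hs) eqxx.
Qed.

Lemma pc_rcons_le u x : (forall t, t != [::] -> palindrome t -> suffix t (rcons u x) -> infix t u) ->
  pc (rcons u x) <= pc u.
Proof.
move=> H; apply: uniq_leq_size; first exact: pal_uniq.
move=> t; rewrite !mem_pal => /and3P [n1 p1 i1]; rewrite n1 p1 /=.
move: i1; rewrite infix_rconsl => /orP [] // hs; exact: H.
Qed.

Lemma pc_cons x u : pc (x :: u) <= (pc u).+1.
Proof. by rewrite -pc_rev rev_cons -(pc_rev u); apply: pc_rcons. Qed.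

Lemma pc_le w : pc w <= size w.
Proof.
elim/last_ind: w => [|u x IH]; first by rewrite /pc /pal_factors /factors.
by rewrite size_rcons; apply: leq_trans (pc_rcons u x) _.
Qed.

Lemma pc_ext p u s : pc u < size u -> pc (p ++ u ++ s) < size (p ++ u ++ s).
Proof.
move=> H.
have Hs : pc (u ++ s) < size (u ++ s).
  elim/last_ind: s => [|s x IH]; first by rewrite cats0.
  rewrite -rcons_cat size_rcons; apply: leq_ltn_trans (pc_rcons _ _) _; by [].
elim: p => [|x p IH] //=.
by apply: leq_ltn_trans (pc_cons _ _) _.
Qed.


Lemma nr_pat a m : a \notin m -> ~~ palindrome m ->
  pc (a :: m ++ [:: a]) < size (a :: m ++ [:: a]).
Proof.
move=> am pm.
have -> : a :: m ++ [:: a] = rcons (a :: m) a by rewrite cats1.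
rewrite size_rcons ltnS; apply: leq_trans (pc_le (a :: m)).
apply: pc_rcons_le => t nt pt /suffixP [q eq].
case: q eq => [|q0 q'] /= eq.
  move: pt; rewrite /palindrome -eq rev_cons rev_rcons /= => /eqP [].
  rewrite -!cats1 => /eqP; rewrite eqseq_cat ?size_rev // eqxx andbT => hm.
  by rewrite /palindrome hm in pm.
case: eq => _ eq.
case: t nt pt eq => [|h t'] // _ pt eq.
case/lastP: t' pt eq => [|t'' z] pt eq.
  move: eq; rewrite !cats1 => eq; case: (rcons_inj eq) => _ <-.
  by apply/orP; left; rewrite eqxx prefix0s.
move: pt; rewrite /palindrome rev_cons rev_rcons /= => /eqP [ez _].
move: eq; rewrite -rcons_cons -rcons_cat => eq.
case: (rcons_inj eq) => em ea.
by move: am; rewrite em mem_cat inE ea ez eqxx orbT.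
Qed.


Lemma uniq_nonpal m : uniq m -> 1 < size m -> ~~ palindrome m.
Proof.
case: m => [|h t] // hu; case/lastP: t hu => [|t' z] // hu _.
apply/negP; rewrite /palindrome rev_cons rev_rcons /= => /eqP [ez _].
by move: hu; rewrite ez /= mem_rcons mem_head.
Qed.

Lemma in_BR_refl w : w != [::] -> in_BR w w.
Proof. by move=> hw; exists [:: w]; rewrite /= hw cats0. Qed.

Lemma in_BR_cons x u v : in_BR u v -> in_BR (x :: u) (v ++ [:: x]).
Proof.
move=> [bs [h1 h2 h3 h4]]; exists ([:: x] :: bs); split => //=.
- by rewrite h3.
- by rewrite rev_cons flatten_rcons h4.
Qed.

Lemma in_BR_rcons y u v : in_BR u v -> in_BR (rcons u y) (y :: v).
Proof.
move=> [bs [h1 h2 h3 h4]]; exists (rcons bs [:: y]); split => //.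
- by rewrite -size_eq0 size_rcons.
- by rewrite all_rcons h2.
- by rewrite flatten_rcons h3 cats1.
- by rewrite rev_rcons /= h4.
Qed.

Lemma in_BR_rev w v : in_BR w v -> in_BR (rev w) (rev v).
Proof.
move=> [bs [h1 h2 h3 h4]]; exists (rev (map rev bs)); split.
- by move: h1; rewrite -!size_eq0 size_rev size_map.
- rewrite all_rev all_map; apply/allP => b hb /=; move/allP: h2 => /(_ b hb).
  move=> nb; apply: contra nb => /eqP e; apply/eqP; by rewrite -(revK b) e.
- by rewrite -h3 rev_flatten.
- by rewrite h4 rev_flatten map_rev !revK.
Qed.

Lemma nalph_cons x s : nalph (x :: s) = (nalph s + (x \notin s))%N.
Proof. by rewrite /nalph /=; case: (x \in s) => /=; rewrite ?addn0 ?addn1. Qed.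

Lemma nalph_rev s : nalph (rev s) = nalph s.
Proof.
rewrite /nalph; apply: perm_size; apply: uniq_perm; rewrite ?undup_uniq // => a.
by rewrite !mem_undup mem_rev.
Qed.

Lemma nalph_rcons s y : nalph (rcons s y) = (nalph s + (y \notin s))%N.
Proof. by rewrite -nalph_rev rev_rcons nalph_cons nalph_rev mem_rev. Qed.


Lemma nr_ext p a m s : a \notin m -> ~~ palindrome m ->
  pc (p ++ (a :: m ++ [:: a]) ++ s) < size (p ++ (a :: m ++ [:: a]) ++ s).
Proof. by move=> h1 h2; apply: pc_ext; apply: nr_pat. Qed.

Lemma nalph_uniq s : uniq s -> nalph s = size s.
Proof. by move=> h; rewrite /nalph undup_id. Qed.

Lemma caseC x u : uniq u -> x \in u -> 3 <= nalph (x :: u) ->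
  exists v, in_BR (x :: u) v /\ pc v < size v.
Proof.
move=> hu hx hn.
case/splitPr: hx hu hn => m s hu hn.
have xm : x \notin m.
  apply/negP => h; move: hu; rewrite cat_uniq => /and3P [_ /hasPn H _].
  by have := H x (mem_head _ _); rewrite /= h.
case: m hu hn xm => [|e [|e' m']] hu hn xm.
- move: hn; rewrite /= nalph_cons mem_head /= addn0 nalph_uniq //=.
  case: s hu => [|e [|f s']] //= hu _.
  exists (x :: (e :: f :: s') ++ [:: x]); split.
    by exists [:: [:: x]; x :: e :: f :: s']; split => //=; rewrite cats0.
  have := nr_ext [::] [::] (m := e :: f :: s') (a := x) _ _.
  rewrite /= cats0; apply.
    by move: hu => /andP [].
  apply: uniq_nonpal => //; by move: hu => /andP [].
- have hx : x \in [:: e, x & s] by rewrite !inE eqxx orbT.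
  move: hn; rewrite /= nalph_cons hx addn0 nalph_uniq //= => hn; clear hx; move: hn.
  case: s hu => [|f s'] //= hu _.
  exists (x :: rcons (f :: s') e ++ [:: x]); split.
    exists [:: [:: x]; [:: e]; x :: f :: s']; split => //=.
    by rewrite cats0.
    by rewrite -cats1 -catA.
  have := nr_ext [::] [::] (m := rcons (f :: s') e) (a := x) _ _.
  rewrite /= cats0; apply.
    move: hu xm; rewrite !inE /= mem_rcons !inE /=.
    case/and3P => _ /norP [h1 h2] _ h3.
    by rewrite (negbTE h1) (negbTE h3) (negbTE h2).
  apply: uniq_nonpal; last by rewrite /= size_rcons.
  rewrite -rcons_cons rcons_uniq.
  move: hu; rewrite /= !inE.
  by case/and4P => /norP [_ /norP [h1 h2]] _ -> ->; rewrite (negbTE h1) (negbTE h2).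
- exists (x :: [:: e, e' & m'] ++ x :: s); split.
    exact: in_BR_refl.
  have := nr_ext [::] s (m := [:: e, e' & m']) (a := x) xm _.
  rewrite /= -catA /=; apply.
  apply: uniq_nonpal => //.
  by move: hu; rewrite cat_uniq => /andP [].
Qed.


Lemma nseq_cons k (c : T) : c :: nseq k c = nseq k c ++ [:: c].
Proof. by elim: k => //= k ->. Qed.

Lemma K n : forall w, size w <= n -> 3 <= nalph w -> ~~ uniq w ->
  exists v, in_BR w v /\ pc v < size v.
Proof.
elim: n => [|n IH] w; first by case: w.
case: w => [|x u] //.
case/lastP: u => [|z y]; first by rewrite /nalph.
move=> hs hn hu.
case: (boolP (uniq (rcons z y))) => hu'.
  apply: caseC => //.
  by move: hu; rewrite /= hu' andbT negbK.
have ew : x :: rcons z y = rcons (x :: z) y by [].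
case: (boolP (uniq (x :: z))) => hz.
  have hy : y \in rev (x :: z).
    by move: hu; rewrite ew rcons_uniq hz andbT negbK mem_rev.
  have hzr : uniq (rev (x :: z)) by rewrite rev_uniq.
  have hnr : 3 <= nalph (y :: rev (x :: z)) by rewrite -rev_rcons nalph_rev -ew.
  have [v [hv1 hv2]] := caseC hzr hy hnr.
  exists (rev v); split; last by rewrite pc_rev size_rev.
  by have := in_BR_rev hv1; rewrite rev_cons revK ew.
case: (leqP 3 (nalph (rcons z y))) => h1.
  have hs' : size (rcons z y) <= n by move: hs; rewrite /= ltnS.
  have [v [hv1 hv2]] := IH (rcons z y) hs' h1 hu'.
  exists (v ++ [:: x]); split; first exact: in_BR_cons.
  by have := pc_ext [::] [:: x] hv2.
case: (leqP 3 (nalph (x :: z))) => h2.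
  have hs' : size (x :: z) <= n by move: hs; rewrite /= size_rcons ltnS.
  have [v [hv1 hv2]] := IH (x :: z) hs' h2 hz.
  exists (y :: v); split; first by rewrite ew; exact: in_BR_rcons.
  by have := pc_ext [:: y] [::] hv2; rewrite /= cats0.
have hx : x \notin rcons z y.
  by move: hn; rewrite nalph_cons; case: (x \in rcons z y) => //=; rewrite addn0 leqNgt h1.
have hy : y \notin x :: z.
  by move: hn; rewrite ew nalph_rcons; case: (y \in x :: z) => //=; rewrite addn0 leqNgt h2.
have hxz : x \notin z by move: hx; rewrite mem_rcons inE negb_or => /andP [].
have hn2 : nalph (x :: z) = 2.
  move: hn h2; rewrite ew nalph_rcons hy; lia.
have hz1 : nalph z = 1 by move: hn2; rewrite nalph_cons hxz addn1 => [[]].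
have hyz : y \notin z by move: hy; rewrite inE negb_or => /andP [].
have hzu : ~~ uniq z by move: hu'; rewrite rcons_uniq hyz.
move: hz1; rewrite /nalph; case Hc: (undup z) => [|c [|? ?]] // _.
have /all_pred1P ez : all (pred1 c) z.
  apply/allP => a ha; have : a \in undup z by rewrite mem_undup.
  by rewrite Hc inE.
move: ez hzu hxz hyz ew hx; set k := size z => ez.
rewrite ez; case: k ez => [|[|k]] ez //= hzu hxz hyz ew hx.
have hxc : x != c by move: hxz; rewrite inE negb_or => /andP [].
have hyc : y != c by move: hyz; rewrite inE negb_or => /andP [].
have hxy : x != y.
  by apply/eqP => exy; move: hx; rewrite exy !inE mem_rcons inE eqxx !orbT.
exists (c :: nseq k c ++ [:: y; x; c]); split.
  exists [:: [:: x; c]; c :: nseq k c ++ [:: y]]; split => //=.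
    by rewrite cats0 cats1.
  by rewrite -catA.
rewrite -cat_cons nseq_cons -catA.
have := nr_ext (nseq k c) [::] (a := c) (m := [:: y; x]) _ _.
rewrite cats0 /=; apply.
  by rewrite !inE negb_or eq_sym hyc eq_sym hxc.
apply/eqP => [[E _]]; by rewrite E eqxx in hxy.
Qed.


Lemma rich_uniq w : uniq w -> pc w = size w.
Proof.
move=> hw; rewrite /pc -(size_map (fun a => [:: a]) w).
apply: perm_size; apply: uniq_perm; first exact: pal_uniq.
  by rewrite map_inj_uniq // => a b [].
move=> t; rewrite mem_pal; apply/and3P/mapP.
  move=> [nt pt it].
  have ut := infix_uniq it hw.
  case: t nt pt it ut => [|a [|b t']] // _ pt it ut.
    by exists a => //; rewrite infix1s in it.
  by rewrite (negbTE (uniq_nonpal ut _)) in pt.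
move=> [a ha ->]; split => //; last by rewrite infix1s.
exact: eqxx.
Qed.

Lemma rich_const (c : T) n : pc (nseq n c) = n.
Proof.
have P : perm_eq (pal_factors (nseq n c)) (map (fun k => nseq k c) (iota 1 n)).
  2: by rewrite /pc (perm_size P) size_map size_iota.
apply: uniq_perm; first exact: pal_uniq.
  rewrite map_inj_uniq ?iota_uniq // => i j /(congr1 size).
  by rewrite !size_nseq.
move=> t; rewrite mem_pal; apply/and3P/mapP.
  move=> [nt pt it].
  have /all_pred1P et : all (pred1 c) t.
    apply/allP => a /(mem_infix it); rewrite mem_nseq => /andP [_ H]; exact: H.
  exists (size t) => //.
  rewrite mem_iota; apply/andP; split; first by case: t nt {pt it et}.
  move/infixP: it => [p [s /(congr1 size)]]; rewrite !size_cat size_nseq => ->.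
  rewrite add1n ltnS; lia.
move=> [k]; rewrite mem_iota => /andP [h1 h2] ->; split.
- by case: k h1 {h2}.
- exact/eqP/rev_nseq.
- have -> : n = (k + (n - k))%N by lia.
  rewrite nseqD; exact: prefix_infix.
Qed.

End S.

Theorem mainTheorem1 (Sigma : eqType) (w : seq Sigma) :
  w != [::] -> nalph w != 2 ->
  ((forall v, in_BR w v -> rich v) <->
   (uniq w \/ exists c : Sigma, w = nseq (size w) c)).
Proof.
move=> hw hn; split.
  move=> H; case: (boolP (uniq w)) => hu; first by left.
  right.
  have hpos : 0 < nalph w.
    case: w hw {H hn hu} => [|a s] // _; rewrite /nalph lt0n size_eq0.
    by apply/eqP => /undup_nil.
  case: (leqP 3 (nalph w)) => h3.
    have [v [hv1 hv2]] := K (leqnn _) h3 hu.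
    by move: (H v hv1); rewrite /rich -/(pc v) => e; rewrite e ltnn in hv2.
  move: hpos h3 hn; rewrite /nalph; case Hc: (undup w) => [|c [|c' [|? ?]]] //= _ _ _.
  exists c; apply/all_pred1P/allP => a ha.
  have : a \in undup w by rewrite mem_undup.
  by rewrite Hc inE.
move=> H v [bs [h1 h2 h3 h4]].
have pv : perm_eq v w by rewrite h4 -h3; apply: perm_flatten; rewrite perm_rev.
case: H => [hu | [c ec]].
  by rewrite /rich -/(pc v) rich_uniq // (perm_uniq pv).
have : all (pred1 c) v by rewrite (perm_all _ pv) ec all_pred1_nseq.
move/all_pred1P => ->.
by rewrite /rich -/(pc _) rich_const size_nseq.
Qed.
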